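(* Let $g:\mathbb R\to\mathbb R$ be continuous. Let $\tilde W\in C^2(\mathbb R)$ be nonnegative with $\tilde W(x)=0$ if and only if $x\in\{0,1\}$. For $\varepsilon>0$ define $f_\varepsilon,f_0:\mathcal V\to\mathbb R\cup\{+\infty\}$ by $$f_\varepsilon(u)=\sum_{i\in V}g\big((\Delta u)_i\big)+\frac1\varepsilon\sum_{i\in V}\tilde W(u_i),$$ $$f_0(u)=\begin{cases}\sum_{i\in V}g\big((\kappa^{1,r}_S)_i\big)&\text{if }u=\chi_S\text{ for some }S\subset V,\\+\infty&\text{otherwise.}\end{cases}$$ Then $f_\varepsilon$ $\Gamma$-converges to $f_0$ as $\varepsilon\to0$, with respect to the Euclidean topology on $\mathcal V\cong\mathbb R^n$. That is, for every sequence $\varepsilon_k\to0^+$ the following two conditions hold. First, for every $u\in\mathcal V$ and every sequence $u_k\to u$, $\liminf_k f_{\varepsilon_k}(u_k)\ge f_0(u)$. Second, for every $u\in\mathcal V$ there is a sequence $u_k\to u$ with $\limsup_kf_{\varepsilon_k}(u_k)\le f_0(u)$.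
   Context: $G=(V,E)$ is a finite undirected weighted graph with vertex set $V=\{1,\dots,n\}$. The weights satisfy $\omega_{ij}=\omega_{ji}\ge0$, with $\omega_{ij}>0$ iff $\{i,j\}\in E$, and $\omega_{ii}=0$. The degrees are $d_i=\sum_j\omega_{ij}>0$. Parameters $r\in[0,1]$ and $q\in[1/2,1]$ are fixed. $\mathcal V$ is the space of functions $V\to\mathbb R$, and $\chi_S$ is the indicator of $S\subset V$. The graph Laplacian is $(\Delta u)_i=d_i^{-r}\sum_j\omega_{ij}(u_i-u_j)$. The graph curvature of $S\subset V$ is the function $\kappa^{q,r}_S\in\mathcal V$ given by $(\kappa^{q,r}_S)_i=d_i^{-r}\sum_{j\in V\setminus S}\omega_{ij}^q$ if $i\in S$, and $(\kappa^{q,r}_S)_i=-d_i^{-r}\sum_{j\in S}\omega_{ij}^q$ if $i\notin S$. Here $\omega_{ij}^q:=0$ when $\omega_{ij}=0$. *)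

(* Defs.v *)
From Stdlib Require Import Reals Lra Classical ClassicalEpsilon.
Open Scope R_scope.

(* Vertices are 0..n-1 (paper's 1..n). Functions on V are nat -> R;
   only values at i < n matter. *)

Fixpoint vsum (n : nat) (f : nat -> R) : R :=
  match n with
  | O => 0
  | S m => vsum m f + f m
  end.

Definition deg (n : nat) (w : nat -> nat -> R) (i : nat) : R :=
  vsum n (fun j => w i j).

Definition lap (n : nat) (w : nat -> nat -> R) (r : R) (u : nat -> R) (i : nat) : R :=
  Rpower (deg n w i) (- r) * vsum n (fun j => w i j * (u i - u j)).

Definition wpow (x q : R) : R :=
  if Req_EM_T x 0 then 0 else Rpower x q.

Definition kappa (n : nat) (w : nat -> nat -> R) (q r : R) (S : nat -> bool) (i : nat) : R :=
  if S i
  then Rpower (deg n w i) (- r) * vsum n (fun j => if S j then 0 else wpow (w i j) q)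
  else - (Rpower (deg n w i) (- r) * vsum n (fun j => if S j then wpow (w i j) q else 0)).

Definition is_chi (n : nat) (S : nat -> bool) (u : nat -> R) : Prop :=
  forall i, (i < n)%nat -> u i = (if S i then 1 else 0).

Inductive ER : Type := Fin (x : R) | PInf.

Definition feps (n : nat) (w : nat -> nat -> R) (r : R) (g W : R -> R) (eps : R)
  (u : nat -> R) : R :=
  vsum n (fun i => g (lap n w r u i)) + / eps * vsum n (fun i => W (u i)).

Definition f0 (n : nat) (w : nat -> nat -> R) (r : R) (g : R -> R) (u : nat -> R) : ER :=
  match excluded_middle_informative (exists S, is_chi n S u) with
  | left H =>
      Fin (vsum n (fun i => g (kappa n w 1 r
             (proj1_sig (constructive_indefinite_description _ H)) i)))
  | right _ => PInf
  end.

Definition liminf_ge (a : nat -> R) (L : ER) : Prop :=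
  match L with
  | Fin l => forall m, m < l -> exists N, forall k, (N <= k)%nat -> m < a k
  | PInf => forall m, exists N, forall k, (N <= k)%nat -> m < a k
  end.

Definition limsup_le (a : nat -> R) (L : ER) : Prop :=
  match L with
  | Fin l => forall m, l < m -> exists N, forall k, (N <= k)%nat -> a k < m
  | PInf => True
  end.

(* convergence in V ≅ R^n (Euclidean topology = coordinatewise) *)
Definition vconv (n : nat) (uk : nat -> nat -> R) (u : nat -> R) : Prop :=
  forall i, (i < n)%nat -> Un_cv (fun k => uk k i) (u i).

(* Main.v *)
Require Import Defs.
From Stdlib Require Import Reals Lra Lia Classical.
Open Scope R_scope.
Lemma cv_const (c : R) : Un_cv (fun _ => c) c.
Proof. intros e He; exists O; intros; unfold R_dist; rewrite Rminus_diag, Rabs_R0; lra. Qed.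

Lemma vsum_ext n f g : (forall j, (j < n)%nat -> f j = g j) -> vsum n f = vsum n g.
Proof. induction n; simpl; intros H; auto. rewrite IHn by (intros; apply H; lia). rewrite H by lia; auto. Qed.

Lemma vsum_opp n f : vsum n (fun j => - f j) = - vsum n f.
Proof. induction n; simpl; [lra|rewrite IHn; lra]. Qed.

Lemma vsum_nn n f : (forall j, (j < n)%nat -> 0 <= f j) -> 0 <= vsum n f.
Proof. induction n; simpl; intros H; [lra|]. assert (0 <= vsum n f) by (apply IHn; intros; apply H; lia). assert (0 <= f n) by (apply H; lia). lra. Qed.

Lemma vsum_ge_term n f i : (forall j, (j < n)%nat -> 0 <= f j) -> (i < n)%nat -> f i <= vsum n f.
Proof. induction n; simpl; intros H Hi; [lia|].
  destruct (Nat.eq_dec i n) as [->|Hne].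
  - assert (0 <= vsum n f) by (apply vsum_nn; intros; apply H; lia). lra.
  - assert (f i <= vsum n f) by (apply IHn; [intros; apply H|]; lia). assert (0 <= f n) by (apply H; lia). lra. Qed.

Lemma vsum_cv n (f : nat -> nat -> R) l : (forall j, (j < n)%nat -> Un_cv (fun k => f k j) (l j)) ->
  Un_cv (fun k => vsum n (f k)) (vsum n l).
Proof. induction n; simpl; intros H. apply cv_const.
  apply CV_plus; [apply IHn; intros; apply H; lia| apply H; lia]. Qed.

Lemma lap_cv n w r uk u i : vconv n uk u -> (i < n)%nat ->
  Un_cv (fun k => lap n w r (uk k) i) (lap n w r u i).
Proof. intros Hc Hi. unfold lap. apply CV_mult; [apply cv_const|].
  apply vsum_cv. intros j Hj. apply CV_mult; [apply cv_const|]. apply CV_minus; auto. Qed.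

Lemma sumg_cv n w r g uk u : continuity g -> vconv n uk u ->
  Un_cv (fun k => vsum n (fun i => g (lap n w r (uk k) i))) (vsum n (fun i => g (lap n w r u i))).
Proof. intros Hg Hc. apply (vsum_cv n (fun k i => g (lap n w r (uk k) i))).
  intros j Hj. apply continuity_seq; [apply Hg|]. apply lap_cv; auto. Qed.

Lemma wpow1 x : 0 <= x -> wpow x 1 = x.
Proof. intros H. unfold wpow. destruct (Req_EM_T x 0); [lra|]. apply Rpower_1. lra. Qed.

Lemma lap_chi n w r S u i : (forall i j, (i < n)%nat -> (j < n)%nat -> 0 <= w i j) ->
  is_chi n S u -> (i < n)%nat -> lap n w r u i = kappa n w 1 r S i.
Proof. intros Hnn Hu Hi. unfold lap, kappa. rewrite (Hu i Hi).
  destruct (S i).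
  - f_equal. apply vsum_ext. intros j Hj. rewrite (Hu j Hj). destruct (S j).
    + ring. + rewrite wpow1 by auto. ring.
  - rewrite Ropp_mult_distr_r, <- vsum_opp. f_equal. apply vsum_ext. intros j Hj.
    rewrite (Hu j Hj). destruct (S j).
    + rewrite wpow1 by auto. ring. + ring. Qed.

Lemma sum_lap_chi n w r g S u : (forall i j, (i < n)%nat -> (j < n)%nat -> 0 <= w i j) ->
  is_chi n S u -> vsum n (fun i => g (lap n w r u i)) = vsum n (fun i => g (kappa n w 1 r S i)).
Proof. intros. apply vsum_ext. intros. rewrite (lap_chi n w r S u); auto. Qed.

Lemma sumW_chi n W S u : W 0 = 0 -> W 1 = 0 -> is_chi n S u -> vsum n (fun i => W (u i)) = 0.
Proof. intros H0 H1 Hu. rewrite (vsum_ext n _ (fun _ => 0)).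
  - clear. induction n; simpl; lra.
  - intros j Hj. rewrite (Hu j Hj). destruct (S j); auto. Qed.

Theorem mainTheorem4
  (n : nat) (w : nat -> nat -> R) (r q : R) (g W : R -> R)
  (Hsym : forall i j, (i < n)%nat -> (j < n)%nat -> w i j = w j i)
  (Hnn : forall i j, (i < n)%nat -> (j < n)%nat -> 0 <= w i j)
  (Hdiag : forall i, (i < n)%nat -> w i i = 0)
  (Hdeg : forall i, (i < n)%nat -> 0 < deg n w i)
  (Hr : 0 <= r <= 1) (Hq : / 2 <= q <= 1)
  (Hg : continuity g)
  (HW2 : exists W1 W2 : R -> R,
      (forall x, derivable_pt_lim W x (W1 x)) /\
      (forall x, derivable_pt_lim W1 x (W2 x)) /\ continuity W2)
  (HWnn : forall x, 0 <= W x)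
  (HW0 : forall x, W x = 0 <-> (x = 0 \/ x = 1))
  (eps : nat -> R) (Heps_pos : forall k, 0 < eps k) (Heps : Un_cv eps 0) :
  (forall (u : nat -> R) (uk : nat -> nat -> R),
      vconv n uk u ->
      liminf_ge (fun k => feps n w r g W (eps k) (uk k)) (f0 n w r g u)) /\
  (forall u : nat -> R,
      exists uk : nat -> nat -> R,
        vconv n uk u /\
        limsup_le (fun k => feps n w r g W (eps k) (uk k)) (f0 n w r g u)).
Proof.
  assert (HWc : continuity W).
  { destruct HW2 as [W1 [W2 [HD _]]]. intros x. apply derivable_continuous_pt.
    exists (W1 x). apply HD. }
  assert (W00 : W 0 = 0) by (apply HW0; auto).
  assert (W10 : W 1 = 0) by (apply HW0; auto).
  split.
  - intros u uk Hc.
    pose proof (sumg_cv n w r g uk u Hg Hc) as Hs.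
    set (Sk := fun k => vsum n (fun i => g (lap n w r (uk k) i))) in Hs.
    assert (HT : forall k, 0 <= / eps k * vsum n (fun i => W (uk k i))).
    { intros k. apply Rmult_le_pos. left; apply Rinv_0_lt_compat; auto.
      apply vsum_nn; intros; auto. }
    unfold f0. destruct (ClassicalEpsilon.excluded_middle_informative _) as [H|H].
    + destruct (ClassicalEpsilon.constructive_indefinite_description _ H) as [S HS]; simpl.
      rewrite <- (sum_lap_chi n w r g S u Hnn HS).
      intros m Hm. destruct (Hs (vsum n (fun i => g (lap n w r u i)) - m)) as [N HN]; [lra|].
      exists N. intros k Hk. specialize (HN k Hk). specialize (HT k). unfold R_dist in HN.
      apply Rabs_def2 in HN. unfold feps. unfold Sk in HN. lra.
    + assert (Hex : exists i, (i < n)%nat /\ u i <> 0 /\ u i <> 1).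
      { apply NNPP. intros Hne. apply H.
        exists (fun i => if Req_EM_T (u i) 1 then true else false).
        intros i Hi. destruct (Req_EM_T (u i) 1); auto.
        apply NNPP. intros Hn0. apply Hne. exists i; auto. }
      destruct Hex as [i [Hi [H0 H1]]].
      set (c := W (u i)).
      assert (Hc0 : 0 < c).
      { destruct (HWnn (u i)) as [|E]; auto. symmetry in E. apply HW0 in E. unfold c; tauto. }
      pose proof (continuity_seq W (fun k => uk k i) (u i) (HWc _) (Hc i Hi)) as HWk.
      intros m.
      destruct (HWk (c/2)) as [N1 HN1]; [lra|].
      destruct (Hs 1) as [N2 HN2]; [lra|].
      set (l := vsum n (fun i => g (lap n w r u i))) in *.
      set (K := Rmax 1 (m - l + 1)).
      assert (HK1 : 1 <= K) by apply Rmax_l.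
      assert (HK2 : m - l + 1 <= K) by apply Rmax_r.
      destruct (Heps (c / (2 * K))) as [N3 HN3].
      { apply Rdiv_lt_0_compat; lra. }
      exists (N1 + N2 + N3)%nat. intros k Hk.
      specialize (HN1 k ltac:(lia)). specialize (HN2 k ltac:(lia)). specialize (HN3 k ltac:(lia)).
      unfold R_dist in *. apply Rabs_def2 in HN1. apply Rabs_def2 in HN2.
      rewrite Rminus_0_r, Rabs_pos_eq in HN3 by (left; auto).
      pose proof (Heps_pos k) as Hek.
      assert (HWi : c / 2 <= vsum n (fun j => W (uk k j))).
      { apply Rle_trans with (W (uk k i)); [unfold c in *; lra|].
        apply (vsum_ge_term n (fun j => W (uk k j))); auto. }
      assert (Hie : 0 < / eps k) by (apply Rinv_0_lt_compat; auto).
      assert (HA : / eps k * (c/2) <= / eps k * vsum n (fun j => W (uk k j)))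
        by (apply Rmult_le_compat_l; lra).
      assert (HB : K < / eps k * (c / 2)).
      { apply Rmult_lt_reg_r with (eps k); auto.
        replace (/ eps k * (c / 2) * eps k) with (c/2) by (field; lra).
        assert (eps k * (2 * K) < c).
        { apply Rmult_lt_reg_r with (/ (2*K)).
          apply Rinv_0_lt_compat; lra.
          replace (eps k * (2 * K) * / (2 * K)) with (eps k) by (field; lra). exact HN3. }
        lra. }
      unfold feps. unfold Sk in HN2. lra.
  - intros u. exists (fun _ => u). split.
    + intros i Hi. apply cv_const.
    + unfold f0. destruct (ClassicalEpsilon.excluded_middle_informative _) as [H|H]; [|exact I].
      destruct (ClassicalEpsilon.constructive_indefinite_description _ H) as [S HS]; simpl.
      intros m Hm. exists O. intros k _. unfold feps.
      rewrite (sum_lap_chi n w r g S u Hnn HS), (sumW_chi n W S u W00 W10 HS). lra.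
Qed.
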